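(* Let $G=(V,E)$ be a vertex-transitive simple undirected graph with $V=[n]$ and let $k\ge1$ be an integer. Consider the problem $$\max_{Z,X\in\mathbb S^n}\langle I,Z\rangle\ \text{ s.t. } Z_{ij}=0\ (\{i,j\}\in E),\ X_{ii}=0\ (i\in[n]),\ Z\ge0,\ X\ge0,\ Z-X\succeq0,\ \begin{bmatrix}1&\mathrm{diag}(Z)^{\top}\\ \mathrm{diag}(Z)&Z+(k-1)X\end{bmatrix}\succeq0.$$ Then the constraints $Z_{ii}-Z_{ij}-(k-1)X_{ij}\ge 0$ for all $i,j\in[n]$ with $i\ne j$ are redundant for this problem, i.e., adding them does not change its optimal value (there is an optimal solution satisfying them).
   Context: A graph is vertex-transitive if for any two vertices there is a graph automorphism mapping one to the other. $\mathbb S^n$ denotes real symmetric $n\times n$ matrices, $\langle A,B\rangle=\mathrm{trace}(AB)$, $\ge0$ entrywise nonnegativity, $\succeq0$ positive semidefiniteness, $\mathrm{diag}(Z)$ the vector of diagonal entries. *)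

(* Defs.v *)
From HB Require Import structures.
From mathcomp Require Import all_boot all_order all_algebra all_fingroup.
From mathcomp Require Import reals.
Set Implicit Arguments. Unset Strict Implicit. Unset Printing Implicit Defensive.
Import Order.TTheory GRing.Theory Num.Theory.
Local Open Scope ring_scope.

Definition simple_graph n (e : rel 'I_n) : Prop :=
  (forall i j, e i j = e j i) /\ (forall i, ~~ e i i).

Definition graph_automorphism n (e : rel 'I_n) (s : {perm 'I_n}) : Prop :=
  forall x y, e (s x) (s y) = e x y.

Definition vertex_transitive n (e : rel 'I_n) : Prop :=
  forall u v : 'I_n, exists s : {perm 'I_n}, graph_automorphism e s /\ s u = v.

Definition psd (R : numDomainType) m (A : 'M[R]_m) : Prop :=
  A^T = A /\ forall v : 'cV[R]_m, 0 <= (v^T *m A *m v) 0 0.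

Definition diagv (R : nzRingType) n (Z : 'M[R]_n) : 'cV[R]_n := \col_i Z i i.

Definition lifted_mx (R : nzRingType) n (k : nat) (Z X : 'M[R]_n) : 'M[R]_(1 + n) :=
  block_mx (1%:M : 'M[R]_1) (diagv Z)^T (diagv Z) (Z + (k%:R - 1) *: X).

Definition sdp_feasible (R : realType) n (e : rel 'I_n) (k : nat)
    (Z X : 'M[R]_n) : Prop :=
  Z^T = Z /\ X^T = X /\
  (forall i j, e i j -> Z i j = 0) /\
  (forall i, X i i = 0) /\
  (forall i j, 0 <= Z i j) /\
  (forall i j, 0 <= X i j) /\
  psd (Z - X) /\
  psd (lifted_mx k Z X).

Definition extra_constraints (R : realType) n (k : nat) (Z X : 'M[R]_n) : Prop :=
  forall i j : 'I_n, i != j -> 0 <= Z i i - Z i j - (k%:R - 1) * X i j.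

(* Main.v *)
Require Import Defs.
From HB Require Import structures.
From mathcomp Require Import all_boot all_order all_algebra all_fingroup.
From mathcomp Require Import reals.
From mathcomp Require Import all_classical all_analysis.
From mathcomp Require Import ring lra.
Import Order.TTheory GRing.Theory Num.Theory.
Import numFieldNormedType.Exports.
Local Open Scope classical_set_scope.
Local Open Scope ring_scope.

Section Topo.
Variable R : realType.

Lemma cont_mul (T : topologicalType) (f g : T -> R) :
  continuous f -> continuous g -> continuous (fun w => f w * g w).
Proof. by move=> cf cg x; apply: cvgM; [apply: cf|apply: cg]. Qed.

Lemma cont_add (T : topologicalType) (f g : T -> R) :
  continuous f -> continuous g -> continuous (fun w => f w + g w).
Proof. by move=> cf cg x; apply: cvgD; [apply: cf|apply: cg]. Qed.

Lemma cont_sub (T : topologicalType) (f g : T -> R) :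
  continuous f -> continuous g -> continuous (fun w => f w - g w).
Proof. by move=> cf cg x; apply: cvgB; [apply: cf|apply: cg]. Qed.

Lemma cont_sum (T : topologicalType) (I : Type) (r : seq I) (P : pred I)
  (F : I -> T -> R) : (forall i, continuous (F i)) ->
  continuous (fun w => \sum_(i <- r | P i) F i w).
Proof.
move=> Fc; elim: r => [|a r IH].
  under boolp.eq_fun do rewrite big_nil. exact: cst_continuous.
under boolp.eq_fun do rewrite big_cons.
case: (P a).
  by apply: cont_add; [apply: Fc | apply: IH].
exact: IH.
Qed.

Lemma closed_ge0 (T : topologicalType) (f : T -> R) :
  continuous f -> closed [set w | 0 <= f w].
Proof.
move=> cf; have -> : [set w | 0 <= f w] = f @^-1` [set x | 0 <= x] by [].
apply: preimage_closed; last exact: closed_ge.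
by move=> x _; apply: cf.
Qed.

Lemma closed_eq0 (T : topologicalType) (f : T -> R) :
  continuous f -> closed [set w | f w = 0].
Proof.
move=> cf; have -> : [set w | f w = 0] = f @^-1` [set x | x = 0] by [].
apply: preimage_closed; last exact: closed_eq.
by move=> x _; apply: cf.
Qed.

Lemma closed_all (T : topologicalType) (I : Type) (Q : I -> T -> Prop) :
  (forall i, closed [set w | Q i w]) -> closed [set w | forall i, Q i w].
Proof.
move=> H; have -> : [set w | forall i, Q i w] = \bigcap_(i in setT) [set w | Q i w].
  by apply/seteqP; split => w /= Hw i; [move=> _; apply: Hw | apply: Hw].
by apply: closed_bigI => i _; apply: H.
Qed.

Lemma closed_and (T : topologicalType) (P Q : T -> Prop) :
  closed [set w | P w] -> closed [set w | Q w] -> closed [set w | P w /\ Q w].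
Proof. move=> a b; exact: (closedI a b). Qed.

Lemma closed_imp (T : topologicalType) (b : bool) (Q : T -> Prop) :
  closed [set w | Q w] -> closed [set w | b -> Q w].
Proof.
case: b => H.
  have -> : [set w | true -> Q w] = [set w | Q w]; last exact: H.
  by apply/seteqP; split => w /=; [apply|move=> q _].
have -> : [set w | false -> Q w] = setT; last exact: closedT.
by apply/seteqP; split => w /=.
Qed.

End Topo.

Section Mats.
Variable R : realType.

Lemma form_sum m (A : 'M[R]_m) (v : 'cV[R]_m) :
  (v^T *m A *m v) 0 0 = \sum_j \sum_i v i 0 * A i j * v j 0.
Proof.
rewrite mxE; apply: eq_bigr => j _; rewrite mxE big_distrl; apply: eq_bigr => i _.
by rewrite !mxE.
Qed.

Lemma symE m (A : 'M[R]_m) : A^T = A <-> forall i j, A j i - A i j = 0.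
Proof.
split.
  by move=> H i j; rewrite -{1}H mxE subrr.
by move=> H; apply/matrixP => i j; rewrite mxE; apply/eqP; rewrite -subr_eq0 H.
Qed.

Lemma closed_psd (T : topologicalType) m (M : T -> 'M[R]_m) :
  (forall i j, continuous (fun w => M w i j)) -> closed [set w | psd (M w)].
Proof.
move=> Mc.
have -> : [set w | psd (M w)] = [set w | (forall i j, M w j i - M w i j = 0) /\
   forall v : 'cV[R]_m, 0 <= \sum_j \sum_i v i 0 * M w i j * v j 0].
  apply/seteqP; split => w /= [H1 H2]; split.
  - by apply/symE.
  - by move=> v; rewrite -form_sum.
  - by apply/symE.
  - by move=> v; rewrite form_sum.
apply: closed_and.
  apply: closed_all => i; apply: closed_all => j; apply: closed_eq0.
  by apply: cont_sub.
apply: closed_all => v; apply: closed_ge0.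
apply: cont_sum => j; apply: cont_sum => i.
apply: cont_mul; last exact: cst_continuous.
apply: cont_mul; first exact: cst_continuous.
exact: Mc.
Qed.

Lemma closed_sym (T : topologicalType) m (M : T -> 'M[R]_m) :
  (forall i j, continuous (fun w => M w i j)) -> closed [set w | (M w)^T = M w].
Proof.
move=> Mc.
have -> : [set w | (M w)^T = M w] = [set w | (forall i j, M w j i - M w i j = 0)].
  by apply/seteqP; split => w /= H; apply/symE.
apply: closed_all => i; apply: closed_all => j; apply: closed_eq0.
by apply: cont_sub.
Qed.

Lemma mxsubE m p (A B : 'M[R]_(m, p)) i j : (A - B) i j = A i j - B i j.
Proof. by rewrite !mxE. Qed.

Variable n : nat.
Variable k : nat.

Lemma lifted_oo (Z X : 'M[R]_n) o o' : lifted_mx k Z X (lshift n o) (lshift n o') = 1.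
Proof. by rewrite /lifted_mx block_mxEul !ord1 mxE. Qed.
Lemma lifted_or (Z X : 'M[R]_n) o j : lifted_mx k Z X (lshift n o) (rshift 1 j) = Z j j.
Proof. by rewrite /lifted_mx block_mxEur !mxE. Qed.
Lemma lifted_ro (Z X : 'M[R]_n) o i : lifted_mx k Z X (rshift 1 i) (lshift n o) = Z i i.
Proof. by rewrite /lifted_mx block_mxEdl !mxE. Qed.
Lemma lifted_rr (Z X : 'M[R]_n) i j :
  lifted_mx k Z X (rshift 1 i) (rshift 1 j) = Z i j + (k%:R - 1) * X i j.
Proof. by rewrite /lifted_mx block_mxEdr !mxE. Qed.

Definition Zof (w : 'rV[R]_(n * n + n * n)) : 'M[R]_n := vec_mx (lsubmx w).
Definition Xof (w : 'rV[R]_(n * n + n * n)) : 'M[R]_n := vec_mx (rsubmx w).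
Definition enc (Z X : 'M[R]_n) : 'rV[R]_(n * n + n * n) := row_mx (mxvec Z) (mxvec X).

Lemma ZofK Z X : Zof (enc Z X) = Z. Proof. by rewrite /Zof /enc row_mxKl mxvecK. Qed.
Lemma XofK Z X : Xof (enc Z X) = X. Proof. by rewrite /Xof /enc row_mxKr mxvecK. Qed.

Lemma ZofE w i j : Zof w i j = w 0 (lshift _ (mxvec_index i j)).
Proof. by rewrite /Zof /vec_mx !mxE. Qed.
Lemma XofE w i j : Xof w i j = w 0 (rshift _ (mxvec_index i j)).
Proof. by rewrite /Xof /vec_mx !mxE. Qed.

Lemma cZ i j : continuous (fun w => Zof w i j).
Proof. under boolp.eq_fun do rewrite ZofE. exact: coord_continuous. Qed.
Lemma cX i j : continuous (fun w => Xof w i j).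
Proof. under boolp.eq_fun do rewrite XofE. exact: coord_continuous. Qed.

Lemma cL a b : continuous (fun w => lifted_mx k (Zof w) (Xof w) a b).
Proof.
rewrite -(fintype.splitK a) -(fintype.splitK b); case: (fintype.split a) => a'; case: (fintype.split b) => b' /=.
- under boolp.eq_fun do rewrite lifted_oo. exact: cst_continuous.
- under boolp.eq_fun do rewrite lifted_or. exact: cZ.
- under boolp.eq_fun do rewrite lifted_ro. exact: cZ.
- under boolp.eq_fun do rewrite lifted_rr.
  apply: cont_add; first exact: cZ.
  apply: cont_mul; [exact: cst_continuous | exact: cX].
Qed.

Lemma closed_feas (e : rel 'I_n) :
  closed [set w | sdp_feasible e k (Zof w) (Xof w)].
Proof.
rewrite /sdp_feasible.
apply: closed_and; first by apply: closed_sym => i j; exact: cZ.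
apply: closed_and; first by apply: closed_sym => i j; exact: cX.
apply: closed_and.
  apply: closed_all => i; apply: closed_all => j; apply: closed_imp.
  by apply: closed_eq0; exact: cZ.
apply: closed_and.
  by apply: closed_all => i; apply: closed_eq0; exact: cX.
apply: closed_and.
  apply: closed_all => i; apply: closed_all => j; apply: closed_ge0. exact: (cZ i j).
apply: closed_and.
  by apply: closed_all => i; apply: closed_all => j; apply: closed_ge0; exact: cX.
apply: closed_and.
  by apply: closed_psd => i j; rewrite /=; under boolp.eq_fun do rewrite mxsubE;
    apply: cont_sub; [exact: cZ | exact: cX].
by apply: closed_psd => i j; exact: cL.
Qed.

End Mats.
Arguments Zof {R n}. Arguments Xof {R n}. Arguments enc {R n}.


Section Bounds.
Variable R : realType.

Lemma mxaddE m p (A B : 'M[R]_(m, p)) i j : (A + B) i j = A i j + B i j.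
Proof. by rewrite !mxE. Qed.
Lemma mxscaleE m p (c : R) (A : 'M[R]_(m, p)) i j : (c *: A) i j = c * A i j.
Proof. by rewrite !mxE. Qed.

Lemma bil m (A : 'M[R]_m) i j : (delta_mx (0 : 'I_1) i *m A *m delta_mx j (0 : 'I_1)) 0 0 = A i j.
Proof. by rewrite -rowE -colE !mxE. Qed.

Lemma psd_pair m (A : 'M[R]_m) i j a b : psd A ->
  0 <= a * a * A i i + a * b * (A i j + A j i) + b * b * A j j.
Proof.
move=> [_ H]; have := H (a *: delta_mx i 0 + b *: delta_mx j 0).
have -> : (a *: delta_mx i 0 + b *: delta_mx j 0)^T =
   a *: delta_mx (0 : 'I_1) i + b *: delta_mx (0 : 'I_1) j :> 'rV[R]_m.
  by apply/matrixP => x y; rewrite !mxE (ord1 x) !eqxx /= !andbT.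
rewrite !mulmxDl !mulmxDr.
rewrite -!(scalemxAl, scalemxAr) !mxaddE !mxscaleE !bil => H'.
by apply: (le_trans H'); rewrite le_eqVlt; apply/orP; left; apply/eqP; ring.
Qed.

Lemma symP m (A : 'M[R]_m) i j : A^T = A -> A j i = A i j.
Proof. by move=> H; rewrite -{1}H mxE. Qed.

Variables (n : nat) (e : rel 'I_n) (k : nat).
Hypothesis k1 : (0 < k)%N.

Lemma kge0 : 0 <= (k%:R : R) - 1.
Proof. by rewrite subr_ge0 ler1n. Qed.

Lemma feas_bounds (Z X : 'M[R]_n) : sdp_feasible e k Z X ->
  forall i j, [/\ 0 <= Z i j, Z i j <= 1, 0 <= X i j & X i j <= 2].
Proof.
move=> [HZs [HXs [HE [HX0 [HZ0 [HXn [HP HL]]]]]]] i j.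
have Zii l : Z l l <= 1.
  have := @psd_pair _ _ (lshift n 0) (rshift 1 l) 1 (-1) HL.
  rewrite lifted_oo lifted_or lifted_ro lifted_rr HX0; lra.
have cX : 0 <= ((k%:R : R) - 1) * X i j by apply: mulr_ge0; [exact: kge0|exact: HXn].
have Zij : Z i j <= 1.
  have := @psd_pair _ _ (rshift 1 i) (rshift 1 j) 1 (-1) HL.
  rewrite !lifted_rr !HX0 (symP _ _ i j HZs) (symP _ _ i j HXs).
  have := Zii i; have := Zii j; lra.
split => //.
have := @psd_pair _ _ i j 1 1 HP.
rewrite !mxsubE !HX0 (symP _ _ i j HZs) (symP _ _ i j HXs).
have := Zii i; have := Zii j; lra.
Qed.

End Bounds.

Section Exist.
Variable R : realType.

Lemma psd0 m : psd (0 : 'M[R]_m).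
Proof. by split; [rewrite trmx0 | move=> v; rewrite mulmx0 mul0mx mxE]. Qed.

Lemma psd_rank1 m (u : 'cV[R]_m) : psd (u *m u^T).
Proof.
split; first by rewrite trmx_mul trmxK.
move=> v; rewrite -!mulmxA mulmxA.
have -> : u^T *m v = (v^T *m u)^T by rewrite trmx_mul trmxK.
by rewrite mxE big_ord1 [X in _ * X]mxE -expr2 sqr_ge0.
Qed.

Variables (n : nat) (e : rel 'I_n) (k : nat).
Hypothesis k1 : (0 < k)%N.

Lemma lifted00 : lifted_mx k (0 : 'M[R]_n) 0 =
  delta_mx (lshift n (0 : 'I_1)) (0 : 'I_1) *m (delta_mx (lshift n (0 : 'I_1)) (0 : 'I_1))^T.
Proof.
apply/matrixP => a b.
rewrite [RHS]mxE big_ord1.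
rewrite -(fintype.splitK a) -(fintype.splitK b).
case: (fintype.split a) => a'; case: (fintype.split b) => b' /=.
- by rewrite lifted_oo !mxE !ord1 !eqxx mulr1.
- by rewrite lifted_or !mxE eq_rlshift mulr0.
- by rewrite lifted_ro !mxE eq_rlshift mul0r.
- by rewrite lifted_rr !mxE eq_rlshift mul0r mulr0 addr0.
Qed.

Lemma feas0 : sdp_feasible e k (0 : 'M[R]_n) 0.
Proof.
split; first by rewrite trmx0.
split; first by rewrite trmx0.
split; first by move=> i j _; rewrite mxE.
split; first by move=> i; rewrite mxE.
split; first by move=> i j; rewrite mxE.
split; first by move=> i j; rewrite mxE.
split; first by rewrite subr0; exact: psd0.
by rewrite lifted00; exact: psd_rank1.
Qed.

Lemma exists_opt : exists Z X : 'M[R]_n, sdp_feasible e k Z X /\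
  forall Z' X', sdp_feasible e k Z' X' -> \tr Z' <= \tr Z.
Proof.
set A := [set w | sdp_feasible e k (Zof w : 'M[R]_n) (Xof w)].
have A0 : A !=set0 by exists (enc 0 0); rewrite /A /= ZofK XofK; exact: feas0.
have cA : compact A.
  apply: bounded_closed_compact; last exact: closed_feas.
  exists 2; split; first by [].
  move=> M HM w Aw.
  rewrite /= [`|_|]/Num.norm /= mx_normrE; apply: bigmax_le => [|[a c] _] /=.
    by apply: ltW; apply: lt_trans HM.
  rewrite (ord1 a) -(fintype.splitK c); case: (fintype.split c) => q /=;
    case/mxvec_indexP: q => i j; idtac;
    have [h1 h2 h3 h4] := @feas_bounds R n e k k1 _ _ Aw i j; rewrite ?ZofE ?XofE in h1 h2 h3 h4; rewrite ler_norml; apply/andP; split; lra.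
have cf : {within A, continuous (fun w => \tr (Zof w : 'M[R]_n))}.
  apply: continuous_subspaceT; rewrite /mxtrace.
  by apply: cont_sum => i; exact: cZ.
have [c Ac Hc] := EVT_max_rV A0 cA cf.
exists (Zof c), (Xof c); rewrite inE in Ac; split => // Z' X' H'.
have := Hc (enc Z' X'); rewrite ZofK; apply; rewrite inE /A /= ZofK XofK //.
Qed.

End Exist.

Section Sym.
Variable R : realType.

Lemma sum_pickr p (l0 : 'I_p) (F : 'I_p -> R) : \sum_l F l * (l0 == l)%:R = F l0.
Proof.
rewrite (bigD1 l0) //= eqxx mulr1 big1 ?addr0 // => l /negbTE.
by rewrite eq_sym => ->; rewrite mulr0.
Qed.
Lemma sum_pickl p (l0 : 'I_p) (F : 'I_p -> R) : \sum_l (l0 == l)%:R * F l = F l0.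
Proof. by rewrite -(sum_pickr _ l0 F); apply: eq_bigr => l _; rewrite mulrC. Qed.

Lemma psd_comp m p (f : 'I_m -> 'I_p) (A : 'M[R]_p) :
  psd A -> psd (\matrix_(i, j) A (f i) (f j)).
Proof.
move=> [HA1 HA2].
set P := \matrix_(l, i) ((f i == l)%:R : R) : 'M[R]_(p, m).
have -> : \matrix_(i, j) A (f i) (f j) = P^T *m A *m P.
  apply/matrixP => i j; rewrite [LHS]mxE [RHS]mxE.
  under eq_bigr do rewrite [P _ _]mxE.
  rewrite sum_pickr [RHS]mxE.
  under [RHS]eq_bigr do rewrite !mxE.
  by rewrite sum_pickl.
split; first by rewrite !trmx_mul trmxK HA1 mulmxA.
move=> v; have := HA2 (P *m v); rewrite trmx_mul !mulmxA //.
Qed.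

Lemma psd_avg m (I : finType) (Pr : pred I) (c : R) (A : I -> 'M[R]_m) :
  0 <= c -> (forall s, Pr s -> psd (A s)) -> psd (c *: \sum_(s | Pr s) A s).
Proof.
move=> c0 H; split.
  apply/matrixP => i j; rewrite mxE !mxscaleE !summxE; congr (_ * _).
  by apply: eq_bigr => s Ps; apply: symP; case: (H s Ps).
move=> v; rewrite -scalemxAr -scalemxAl mxscaleE; apply: mulr_ge0 => //.
rewrite mulmx_sumr mulmx_suml summxE; apply: sumr_ge0 => s Ps.
by case: (H s Ps) => _; apply.
Qed.

Variables (n : nat) (e : rel 'I_n) (k : nat).

Definition autb (s : {perm 'I_n}) : bool :=
  [forall x, [forall y, e (s x) (s y) == e x y]].

Lemma autbP (s : {perm 'I_n}) : reflect (forall x y, e (s x) (s y) = e x y) (autb s).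
Proof.
apply: (iffP idP) => [/forallP H x y | H].
  by move/forallP: (H x) => /(_ y)/eqP.
by apply/forallP => x; apply/forallP => y; apply/eqP.
Qed.

Lemma autb_mul (t s : {perm 'I_n}) : autb t -> autb (t * s)%g = autb s.
Proof.
move=> /autbP Ht; apply/autbP/autbP => H x y.
- have := H (t^-1 x)%g (t^-1 y)%g; rewrite !permM !permKV => ->.
  by rewrite -Ht !permKV.
- by rewrite !permM H Ht.
Qed.

Definition pmx (s : {perm 'I_n}) (A : 'M[R]_n) := \matrix_(i, j) A (s i) (s j).

Lemma feas_perm (s : {perm 'I_n}) (Z X : 'M[R]_n) : autb s -> sdp_feasible e k Z X ->
  sdp_feasible e k (pmx s Z) (pmx s X).
Proof.
move=> /autbP Hs [HZs [HXs [HE [HX0 [HZ0 [HXn [HP HL]]]]]]].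
split; first by apply/matrixP => i j; rewrite !mxE; apply: symP.
split; first by apply/matrixP => i j; rewrite !mxE; apply: symP.
split; first by move=> i j Eij; rewrite mxE; apply: HE; rewrite Hs.
split; first by move=> i; rewrite mxE.
split; first by move=> i j; rewrite mxE.
split; first by move=> i j; rewrite mxE.
split.
  have -> : pmx s Z - pmx s X = \matrix_(i, j) (Z - X) (s i) (s j).
    by apply/matrixP => i j; rewrite !mxE.
  exact: psd_comp.
pose g (a : 'I_(1 + n)) : 'I_(1 + n) :=
  unsplit (match fintype.split a with inl o => inl o | inr i => inr (s i) end).
have -> : lifted_mx k (pmx s Z) (pmx s X) =
    \matrix_(a, b) lifted_mx k Z X (g a) (g b).
  apply/matrixP => a b; rewrite [RHS]mxE /g.
  rewrite -(fintype.splitK a) -(fintype.splitK b).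
  case: (fintype.split a) => a'; case: (fintype.split b) => b'; rewrite !unsplitK /=.
  - by rewrite !lifted_oo.
  - by rewrite !lifted_or mxE.
  - by rewrite !lifted_ro mxE.
  - by rewrite !lifted_rr !mxE.
exact: psd_comp.
Qed.

Lemma feas_avg (Zf Xf : {perm 'I_n} -> 'M[R]_n) (c : R) :
  0 <= c -> c * (\sum_(s | autb s) 1) = 1 ->
  (forall s, autb s -> sdp_feasible e k (Zf s) (Xf s)) ->
  sdp_feasible e k (c *: \sum_(s | autb s) Zf s) (c *: \sum_(s | autb s) Xf s).
Proof.
move=> c0 c1 H.
split.
  apply/matrixP => i j; rewrite mxE !mxscaleE !summxE; congr (_ * _).
  by apply: eq_bigr => s Ps; apply: symP; case: (H s Ps).
split.
  apply/matrixP => i j; rewrite mxE !mxscaleE !summxE; congr (_ * _).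
  by apply: eq_bigr => s Ps; apply: symP; case: (H s Ps) => _ [].
split.
  move=> i j Eij; rewrite mxscaleE summxE big1 ?mulr0 // => s Ps.
  by case: (H s Ps) => _ [_ [HE _]]; apply: HE.
split.
  move=> i; rewrite mxscaleE summxE big1 ?mulr0 // => s Ps.
  by case: (H s Ps) => _ [_ [_ [HX _]]].
split.
  move=> i j; rewrite mxscaleE summxE; apply: mulr_ge0 => //; apply: sumr_ge0 => s Ps.
  by case: (H s Ps) => _ [_ [_ [_ [HZ _]]]].
split.
  move=> i j; rewrite mxscaleE summxE; apply: mulr_ge0 => //; apply: sumr_ge0 => s Ps.
  by case: (H s Ps) => _ [_ [_ [_ [_ [HX _]]]]].
split.
  rewrite -scalerBr -sumrB; apply: psd_avg => // s Ps.
  by case: (H s Ps) => _ [_ [_ [_ [_ [_ [HP _]]]]]].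
have -> : lifted_mx k (c *: \sum_(s | autb s) Zf s) (c *: \sum_(s | autb s) Xf s) =
    c *: \sum_(s | autb s) lifted_mx k (Zf s) (Xf s).
  apply/matrixP => a b; rewrite mxscaleE summxE.
  rewrite -(fintype.splitK a) -(fintype.splitK b).
  case: (fintype.split a) => a'; case: (fintype.split b) => b' /=.
  - rewrite lifted_oo -c1; congr (_ * _); apply: eq_bigr => s _.
    by rewrite lifted_oo.
  - rewrite lifted_or mxscaleE summxE; congr (_ * _); apply: eq_bigr => s _.
    by rewrite lifted_or.
  - rewrite lifted_ro mxscaleE summxE; congr (_ * _); apply: eq_bigr => s _.
    by rewrite lifted_ro.
  - rewrite lifted_rr !mxscaleE !summxE.
    under [in RHS]eq_bigr do rewrite lifted_rr.
    rewrite big_split /= -mulr_sumr; ring.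
apply: psd_avg => // s Ps.
by case: (H s Ps) => _ [_ [_ [_ [_ [_ [_ HL]]]]]].
Qed.

End Sym.
Arguments autb {n} e s.
Arguments pmx {R n} s A.

Theorem proposition2 (R : realType) (n : nat) (e : rel 'I_n) (k : nat) :
  simple_graph e -> vertex_transitive e -> (0 < k)%N ->
  exists Z X : 'M[R]_n,
    [/\ sdp_feasible e k Z X,
        extra_constraints k Z X &
        forall Z' X' : 'M[R]_n, sdp_feasible e k Z' X' -> \tr Z' <= \tr Z].
Proof.
move=> _ Hvt k1.
have [Z0 [X0 [F0 Opt]]] := @exists_opt R n e k k1.
set cnt := \sum_(s | autb e s) (1 : R).
have cnt1 : 1 <= cnt.
  rewrite /cnt (bigD1 1%g) /=; last by apply/autbP => x y; rewrite !perm1.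
  by rewrite lerDl; apply: sumr_ge0.
have cnt0 : cnt != 0 by apply: lt0r_neq0; apply: lt_le_trans cnt1.
set c := cnt^-1.
have c0 : 0 <= c by rewrite invr_ge0; apply: le_trans cnt1.
have c1 : c * cnt = 1 by rewrite mulVf.
set Z := c *: \sum_(s | autb e s) pmx s Z0.
set X := c *: \sum_(s | autb e s) pmx s X0.
have HF : sdp_feasible e k Z X.
  apply: feas_avg => // s Ps; exact: feas_perm.
have Htr : \tr Z = \tr Z0.
  rewrite /Z /mxtrace.
  under eq_bigr do rewrite mxscaleE summxE.
  rewrite -mulr_sumr exchange_big /=.
  have Hs : forall s : {perm 'I_n}, \sum_i pmx s Z0 i i = \sum_i Z0 i i.
    move=> s; under eq_bigr do rewrite mxE.
    by rewrite [RHS](reindex_inj (@perm_inj _ s)).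
  under eq_bigr do rewrite Hs.
  have -> : \sum_(s | autb e s) \sum_i Z0 i i = (\sum_i Z0 i i) * cnt.
    by rewrite /cnt mulr_sumr; apply: eq_bigr => s _; rewrite mulr1.
  by rewrite mulrA [c * _]mulrC -mulrA c1 mulr1.
have Hdiag : forall i j, Z i i = Z j j.
  move=> i j; rewrite /Z !mxscaleE !summxE; congr (_ * _).
  have [t [Ht tij]] := Hvt i j.
  rewrite [LHS](reindex_inj (mulgI t)) /=.
  apply: eq_big => s; first by rewrite autb_mul //; apply/autbP.
  by move=> _; rewrite !mxE !permM tij.
exists Z, X; split => //.
- move=> i j _.
  have [HZs [HXs [_ [HX0 _]]]] := HF.
  have [_ [_ [_ [_ [_ [_ [_ HL]]]]]]] := HF.
  have := @psd_pair R _ _ (rshift 1 i) (rshift 1 j) 1 (-1) HL.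
  rewrite !lifted_rr !HX0 (symP _ _ _ i j HZs) (symP _ _ _ i j HXs) (Hdiag j i).
  lra.
- by move=> Z' X' H'; rewrite Htr; apply: Opt H'.
Qed.
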